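(* Let $L\in\mathbb{R}^{m\times m}$ satisfy $\|\mathrm{e}^{\omega L}\|_\infty\le1$ for all $\omega>0$, and let $f$ satisfy: there exist $\rho>0$ and $\omega_0^+>0$ such that $|\xi+\omega f(\xi)|\le\rho$ for all $\xi\in[-\rho,\rho]$, $\omega\in(0,\omega_0^+]$. Consider the scheme $$u^{(1)}=\mathrm{e}^{\frac{2\tau}{3}L}u^n+\tfrac{2\tau}{3}\mathrm{e}^{\frac{2\tau}{3}L}f(u^n),$$ $$u^{(2)}=\mathrm{e}^{\frac{2\tau}{3}L}u^n+\tfrac{2\tau}{3}\Big(\tfrac13\mathrm{e}^{\frac{2\tau}{3}L}f(u^n)+\tfrac23 f(u^{(1)})\Big),$$ $$u^{n+1}=\mathrm{e}^{\tau L}u^n+\tau\Big(\tfrac{4}{16}\mathrm{e}^{\tau L}f(u^n)+\tfrac{3}{16}\mathrm{e}^{\frac{\tau}{3}L}f(u^{(1)})+\tfrac{9}{16}\mathrm{e}^{\frac{\tau}{3}L}f(u^{(2)})\Big).$$ If $\|u^n\|_\infty\le\rho$ and $0<\tau\le\frac34\omega_0^+$, then $\|u^{n+1}\|_\infty\le\rho$.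
   Context: $\|\cdot\|_\infty$ is the vector $\infty$-norm and induced matrix norm; $f(u)$ for a vector $u$ is applied componentwise. *)

(* Defs.v *)
From HB Require Import structures.
From mathcomp Require Import all_boot all_order all_algebra.
From mathcomp Require Import all_classical all_reals topology normedtype sequences.
Set Implicit Arguments. Unset Strict Implicit. Unset Printing Implicit Defensive.
Import Order.TTheory GRing.Theory Num.Theory numFieldNormedType.Exports.
Local Open Scope ring_scope.

(* Matrix exponential, defined entrywise as the limit of the exponential series
   sum_k A^k / k!  (the series converges absolutely for every square matrix). *)
Definition expm (R : realType) (m : nat) (A : 'M[R]_m) : 'M[R]_m :=
  \matrix_(i, j) limn (series (fun k : nat => ((k`!%:R)^-1 *: A ^+ k) i j)).

Definition vnorm_inf (R : realType) (m : nat) (u : 'cV[R]_m) : R :=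
  \big[Num.max/0]_(i < m) `|u i ord0|.

Definition mnorm_inf (R : realType) (m : nat) (A : 'M[R]_m) : R :=
  \big[Num.max/0]_(i < m) \sum_(j < m) `|A i j|.

Definition fvec (R : realType) (m : nat) (f : R -> R) (u : 'cV[R]_m) : 'cV[R]_m :=
  \col_i f (u i ord0).

Definition scheme_step (R : realType) (m : nat) (L : 'M[R]_m) (f : R -> R)
    (tau : R) (u : 'cV[R]_m) : 'cV[R]_m :=
  let E23 := expm ((2 * tau / 3) *: L) in
  let E13 := expm ((tau / 3) *: L) in
  let E1  := expm (tau *: L) in
  let u1 := E23 *m u + (2 * tau / 3) *: (E23 *m fvec f u) in
  let u2 := E23 *m u + (2 * tau / 3) *:
              ((1 / 3) *: (E23 *m fvec f u) + (2 / 3) *: fvec f u1) in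
  E1 *m u + tau *: ((4 / 16) *: (E1 *m fvec f u)
                    + (3 / 16) *: (E13 *m fvec f u1)
                    + (9 / 16) *: (E13 *m fvec f u2)).

(* Main.v *)
Require Import Defs.
From HB Require Import structures.
From mathcomp Require Import all_boot all_order all_algebra.
From mathcomp Require Import all_classical all_reals topology normedtype sequences.
From mathcomp Require Import exp ring lra.
Import Order.TTheory GRing.Theory Num.Theory numFieldNormedType.Exports.
Local Open Scope ring_scope.

Set Implicit Arguments. Unset Strict Implicit. Unset Printing Implicit Defensive.

Lemma tri_sum (V : zmodType) (g : nat -> nat -> V) (N : nat) :
  \sum_(i < N) \sum_(j < N) g i j =
  \sum_(k < N) \sum_(i < k.+1) g i (k - i)%N
  + \sum_(i < N) \sum_(N - i <= j < N) g i j.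
Proof.
have U : forall N, \sum_(i < N) \sum_(j < N - i) g i j =
                  \sum_(k < N) \sum_(i < k.+1) g i (k - i)%N.
  elim=> [|n IH]; first by rewrite !big_ord0.
  rewrite big_ord_recr /= [RHS]big_ord_recr /= -IH.
  rewrite subSnn big_ord1 [in RHS]big_ord_recr /= subnn addrA; congr (_ + _).
  rewrite -big_split /=; apply: eq_bigr => i _.
  by rewrite subSn ?(ltnW (ltn_ord i)) // big_ord_recr.
rewrite -U -big_split /=; apply: eq_bigr => i _.
rewrite -(big_mkord xpredT) -(big_mkord xpredT (g i)).
rewrite (big_cat_nat _ (n:=N - i)) //=; exact: leq_subr.
Qed.


Definition cf (R : realType) (a : R) (k : nat) : R := (k`!%:R)^-1 * a ^+ k.

Definition Ps (R : realType) (V : algType R) (A : V) (a : R) (N : nat) : V :=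
  \sum_(k < N) cf a k *: A ^+ k.

Lemma cf_binom (R : realType) (a b : R) (k : nat) :
  \sum_(i < k.+1) cf a i * cf b (k - i) = cf (a + b) k.
Proof.
rewrite /cf addrC exprDn mulr_sumr; apply: eq_bigr => i _.
have hi : (i <= k)%N by rewrite -ltnS.
have := bin_fact hi => /(congr1 (fun n : nat => n%:R : R)); rewrite !natrM => hf.
have f0 : forall n, (n`!%:R : R) != 0 by move=> n; rewrite pnatr_eq0 -lt0n fact_gt0.
rewrite -mulr_natr -hf.
have c0 : ('C(k, i)%:R : R) != 0 by rewrite pnatr_eq0 -lt0n bin_gt0.
field.
by rewrite c0 !f0.
Qed.

Lemma Ps_mul (R : realType) (V : algType R) (A : V) (a b : R) (N : nat) :
  Ps A a N * Ps A b N = Ps A (a + b) N +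
  \sum_(i < N) \sum_(N - i <= j < N) (cf a i * cf b j) *: A ^+ (i + j).
Proof.
rewrite /Ps mulr_suml.
under eq_bigr do rewrite mulr_sumr.
have E : forall i j : nat, cf a i *: A ^+ i * (cf b j *: A ^+ j) =
             (cf a i * cf b j) *: A ^+ (i + j).
  by move=> i j; rewrite -scalerAl -scalerAr scalerA exprD.
under eq_bigr do under eq_bigr do rewrite E.
have := tri_sum (fun i j => (cf a i * cf b j) *: A ^+ (i + j)) N.
move=> ->.
congr (_ + _); apply: eq_bigr => k _.
rewrite -cf_binom scaler_suml; apply: eq_bigr => i _.
by rewrite subnKC // -ltnS.
Qed.


Definition Km (R : realType) (n : nat) (A : 'M[R]_n) : R :=
  \sum_(i < n) \sum_(j < n) `|A i j|.

Lemma Km_ge0 (R : realType) (n : nat) (A : 'M[R]_n) : 0 <= Km A.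
Proof. by apply: sumr_ge0 => i _; apply: sumr_ge0 => j _. Qed.

Lemma col_le_Km (R : realType) (n : nat) (A : 'M[R]_n) s :
  \sum_(l < n) `|A l s| <= Km A.
Proof.
apply: ler_sum => l _.
rewrite (bigD1 s) //= lerDl; exact: sumr_ge0.
Qed.

Lemma expx_bound (R : realType) (n : nat) (A : 'M[R]_n.+1) k r s :
  `|(A ^+ k) r s| <= Km A ^+ k.
Proof.
elim: k r s => [|k IH] r s.
  rewrite expr0 mxE; case: (r == s) => /=; by rewrite ?normr1 ?normr0.
rewrite exprSr -mulmxE mxE exprSr.
apply: (le_trans (ler_norm_sum _ _ _)).
apply: (@le_trans _ _ (\sum_(l < n.+1) Km A ^+ k * `|A l s|)).
  apply: ler_sum => l _; rewrite normrM ler_wpM2r //.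
rewrite -mulr_sumr ler_wpM2l ?exprn_ge0 ?Km_ge0 //; exact: col_le_Km.
Qed.

Lemma Ps_cvg (R : realType) (n : nat) (A : 'M[R]_n.+1) (a : R) r s :
  ((fun N => Ps A a N r s) @ \oo --> expm (a *: A) r s)%classic.
Proof.
have eu : (fun k => ((k`!%:R)^-1 *: (a *: A) ^+ k) r s) =
          (fun k => (cf a k *: A ^+ k) r s).
  by apply/funext => k; rewrite exprZn scalerA.
have es : series (fun k => (cf a k *: A ^+ k) r s) = (fun N => Ps A a N r s).
  by apply/funext => N; rewrite /series /= /Ps summxE big_mkord.
rewrite /expm mxE eu -es.

have h := @normed_cvg _ R^o (fun k : nat => (cf a k *: A ^+ k) r s).
apply: h.
refine (@series_le_cvg R _ (exp_coeff (`|a| * Km A)) _ _ _ _).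
- by move=> k /=.
- by move=> k; apply: exp_coeff_ge0; rewrite mulr_ge0 ?Km_ge0.
2: exact: (is_cvg_series_exp_coeff (`|a| * Km A)).
move=> k /=.
have -> : exp_coeff (`|a| * Km A) k = ((k`!%:R)^-1 * `|a| ^+ k) * Km A ^+ k.
  by rewrite /exp_coeff /= exprMn mulrC mulrA.
rewrite mxE /cf normrM normrM normrX [`|_^-1|]ger0_norm ?invr_ge0 //.
rewrite ler_wpM2l ?mulr_ge0 ?invr_ge0 ?exprn_ge0 //; exact: expx_bound.
Qed.


Lemma cvg_bigsum (R : realType) (k : nat) (F : 'I_k -> nat -> R) (l : 'I_k -> R) :
  (forall i, (F i @ \oo --> l i)%classic) ->
  ((fun N => \sum_(i < k) F i N) @ \oo --> \sum_(i < k) l i)%classic.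
Proof.
elim: k F l => [|k IH] F l H.
  under eq_fun do rewrite big_ord0.
  rewrite big_ord0; exact: cvg_cst.
under eq_fun do rewrite big_ord_recr /=.
rewrite big_ord_recr /=.
apply: cvgD; last exact: H.
exact: (IH (fun i => F (widen_ord (leqnSn k) i))).
Qed.

Lemma Ps1 (R : realType) (x : R) (N : nat) :
  Ps (1 : R^o) x N = series (exp_coeff x) N.
Proof.
rewrite /Ps /series /= big_mkord; apply: eq_bigr => k _.
by rewrite expr1n /cf /exp_coeff /= [_ *: _]mulr1 mulrC.
Qed.

Lemma cf_abs (R : realType) (a K : R) (i : nat) : 0 <= K ->
  `|cf a i| * K ^+ i = cf (`|a| * K) i.
Proof.
move=> K0; rewrite /cf normrM normrX ger0_norm ?invr_ge0 //.
by rewrite exprMn mulrA.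
Qed.

Lemma expm_add (R : realType) (n : nat) (A : 'M[R]_n.+1) (a b : R) :
  expm (a *: A) *m expm (b *: A) = expm ((a + b) *: A).
Proof.
apply/matrixP => r s.
pose D := fun N => \sum_(i < N) \sum_(N - i <= j < N)
                     (cf a i * cf b j) *: A ^+ (i + j).
pose x := `|a| * Km A. pose y := `|b| * Km A.
pose d := fun N => \sum_(i < N) \sum_(N - i <= j < N)
                     (cf x i * cf y j) *: (1 : R^o) ^+ (i + j).
have hD : forall N, Ps A (a + b) N r s =
          (Ps A a N *m Ps A b N) r s - D N r s.
  by move=> N; rewrite mulmxE Ps_mul [in RHS]mxE addrK.
have hd : forall N, d N = series (exp_coeff x) N * series (exp_coeff y) N
                          - series (exp_coeff (x + y)) N.
  by move=> N; rewrite -!Ps1 Ps_mul addrAC subrr add0r.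
have dcvg : (d @ \oo --> 0)%classic.
  have -> : (0 : R) = expR x * expR y - expR (x + y) by rewrite expRD subrr.
  have -> : d = fun N => series (exp_coeff x) N * series (exp_coeff y) N
                          - series (exp_coeff (x + y)) N.
    by apply/funext => N; rewrite hd.
  apply: cvgB; first apply: cvgM; exact: is_cvg_series_exp_coeff.
have Dle : forall N, `|D N r s| <= d N.
  move=> N; rewrite /D /d summxE.
  apply: (le_trans (ler_norm_sum _ _ _)); apply: ler_sum => i _.
  rewrite summxE; apply: (le_trans (ler_norm_sum _ _ _)).
  apply: ler_sum => j _.
  rewrite mxE expr1n [_ *: 1]mulr1 normrM normrM.
  rewrite /x /y -(cf_abs a _ (Km_ge0 A)) -(cf_abs b _ (Km_ge0 A)).
  rewrite mulrACA -exprD ler_wpM2l ?mulr_ge0 //; exact: expx_bound.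
have Dcvg : ((fun N => D N r s) @ \oo --> 0)%classic.
  apply: (@squeeze_cvgr _ _ _ _ (fun N => - d N) d).
  - by apply: nearW => N; rewrite -ler_norml; exact: Dle.
  - rewrite -oppr0; exact: cvgN.
  - exact: dcvg.
have Pcvg : ((fun N => (Ps A a N *m Ps A b N) r s) @ \oo -->
             (expm (a *: A) *m expm (b *: A)) r s)%classic.
  rewrite mxE; under eq_fun do rewrite mxE.
  apply: cvg_bigsum => l; apply: cvgM; exact: Ps_cvg.
have h' : ((fun N => Ps A (a + b) N r s) @ \oo -->
             (expm (a *: A) *m expm (b *: A)) r s)%classic.
  have -> : (fun N => Ps A (a + b) N r s) =
            (fun N => (Ps A a N *m Ps A b N) r s) - (fun N => D N r s).
    by apply/funext => N; rewrite hD.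
  rewrite -[(expm _ *m expm _) r s]subr0; exact: cvgB Pcvg Dcvg.
have e1 := cvg_lim _ h'.
have e2 := cvg_lim _ (@Ps_cvg _ _ A (a + b) r s).
by rewrite -e2 // -e1.
Qed.


Lemma vnorm_ge0 (R : realType) m (u : 'cV[R]_m) : 0 <= vnorm_inf u.
Proof. by rewrite /vnorm_inf; elim/big_ind: _ => //= x y hx hy; rewrite le_max hx. Qed.

Lemma mnorm_ge0 (R : realType) m (A : 'M[R]_m) : 0 <= mnorm_inf A.
Proof. rewrite /mnorm_inf; elim/big_ind: _ => //= [x y hx hy|i _]; [by rewrite le_max hx | exact: sumr_ge0]. Qed.

Lemma vnorm_leP (R : realType) m (u : 'cV[R]_m) (rho : R) : 0 <= rho ->
  (vnorm_inf u <= rho) <-> (forall i, `|u i ord0| <= rho).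
Proof.
move=> r0; split.
  by move=> /bigmax_leP [_ H] i; exact: H.
by move=> H; apply/bigmax_leP; split.
Qed.

Lemma vnorm_entry (R : realType) m (u : 'cV[R]_m) i : `|u i ord0| <= vnorm_inf u.
Proof. exact: (le_bigmax _ (fun i => `|u i ord0|) i). Qed.

Lemma vnorm_mul (R : realType) m (A : 'M[R]_m) (u : 'cV[R]_m) :
  vnorm_inf (A *m u) <= mnorm_inf A * vnorm_inf u.
Proof.
apply/(vnorm_leP _ (mulr_ge0 (mnorm_ge0 A) (vnorm_ge0 u))) => i.
rewrite mxE; apply: (le_trans (ler_norm_sum _ _ _)).
apply: (@le_trans _ _ (\sum_(j < m) `|A i j| * vnorm_inf u)).
  by apply: ler_sum => j _; rewrite normrM ler_wpM2l // vnorm_entry.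
rewrite -mulr_suml ler_wpM2r ?vnorm_ge0 //.
exact: (le_bigmax _ (fun i => \sum_(j < m) `|A i j|) i).
Qed.

Lemma vnorm_contr (R : realType) m (A : 'M[R]_m) (u : 'cV[R]_m) :
  mnorm_inf A <= 1 -> vnorm_inf (A *m u) <= vnorm_inf u.
Proof.
move=> h; apply: (le_trans (vnorm_mul A u)).
by rewrite -[leRHS]mul1r ler_wpM2r ?vnorm_ge0.
Qed.

Lemma vnorm_conv (R : realType) m (v w : 'cV[R]_m) (c rho : R) :
  0 <= rho -> 0 <= c <= 1 -> vnorm_inf v <= rho -> vnorm_inf w <= rho ->
  vnorm_inf (c *: v + (1 - c) *: w) <= rho.
Proof.
move=> r0 /andP[c0 c1] /(vnorm_leP _ r0) hv /(vnorm_leP _ r0) hw.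
apply/(vnorm_leP _ r0) => i; rewrite !mxE.
apply: (le_trans (ler_normD _ _)); have c1' : 0 <= 1 - c by rewrite subr_ge0.
rewrite !normrM (ger0_norm c0) (ger0_norm c1').
have := hv i; have := hw i.
move: `|v i ord0| `|w i ord0| => x y hy hx.
have h1 : 0 <= c * (rho - x) by rewrite mulr_ge0 // subr_ge0.
have h2 : 0 <= (1 - c) * (rho - y) by rewrite mulr_ge0 // subr_ge0.
lra.
Qed.


Lemma id2 (R : realType) n (p q g : 'cV[R]_n) (t : R) :
  p + (2 * t / 3) *: ((1 / 3) *: q + (2 / 3) *: g) =
  (1 / 3) *: ((p + (2 * t / 3) *: q) + (4 * t / 3) *: g) + (1 - 1 / 3) *: p.
Proof. apply/matrixP => i j; rewrite !mxE; ring. Qed.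

Lemma id3 (R : realType) n (p q h k : 'cV[R]_n) (t : R) :
  p + t *: ((4 / 16) *: q + (3 / 16) *: h + (9 / 16) *: k) =
  (37 / 64) *: (p + (10 * t / 37) *: q) + (1 - 37 / 64) *:
     ((p + (2 * t / 3) *: ((1 / 3) *: q + (2 / 3) *: h)) + (4 * t / 3) *: k).
Proof. apply/matrixP => i j; rewrite !mxE; field.
by []. Qed.

Unset Implicit Arguments.
Theorem mainTheorem5 (R : realType) (m : nat) (L : 'M[R]_m) (f : R -> R)
    (rho omega0 : R) (u : 'cV[R]_m) (tau : R) :
  (forall omega : R, 0 < omega -> mnorm_inf (expm (omega *: L)) <= 1) ->
  0 < rho -> 0 < omega0 ->
  (forall xi omega : R, -rho <= xi <= rho -> 0 < omega <= omega0 ->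
      `|xi + omega * f xi| <= rho) ->
  vnorm_inf u <= rho ->
  0 < tau <= 3 / 4 * omega0 ->
  vnorm_inf (scheme_step L f tau u) <= rho.
Proof.
case: m L u => [|n] L u hL r0 w0 hf hu /andP[t0 tw].
  by rewrite /vnorm_inf big_ord0 ltW.
have r0' := ltW r0.
have hE : forall om (v : 'cV[R]_n.+1), 0 < om ->
    vnorm_inf (expm (om *: L) *m v) <= vnorm_inf v.
  by move=> om v om0; apply: vnorm_contr; apply: hL.
have hF : forall om (v : 'cV[R]_n.+1), 0 < om -> om <= omega0 ->
    vnorm_inf v <= rho -> vnorm_inf (v + om *: fvec f v) <= rho.
  move=> om v om0 omw /(vnorm_leP _ r0') hv.
  apply/(vnorm_leP _ r0') => i; rewrite !mxE.
  apply: hf; last by rewrite om0 omw.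
  by rewrite -ler_norml.
have hsg : expm ((tau / 3) *: L) *m expm ((2 * tau / 3) *: L) = expm (tau *: L).
  by rewrite expm_add; congr (expm (_ *: L)); field.
rewrite /scheme_step /=.
set E23 := expm ((2 * tau / 3) *: L).
set E13 := expm ((tau / 3) *: L).
set E1 := expm (tau *: L).
set fu := fvec f u.
set u1 := E23 *m u + (2 * tau / 3) *: (E23 *m fu).
set u2 := E23 *m u + (2 * tau / 3) *: ((1 / 3) *: (E23 *m fu) + (2 / 3) *: fvec f u1).
have hu1 : vnorm_inf u1 <= rho.
  rewrite /u1 scalemxAr -mulmxDr.
  apply: (le_trans (hE _ _ _)); first by lra.
  apply: hF => //; lra.
have hu2 : vnorm_inf u2 <= rho.
  rewrite /u2 id2 -/u1; apply: vnorm_conv => //; first by lra.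
    apply: hF => //; lra.
  apply: (le_trans (hE _ _ _)) => //; lra.
have hE13u2 : E13 *m u2 = E1 *m u + (2 * tau / 3) *:
      ((1 / 3) *: (E1 *m fu) + (2 / 3) *: (E13 *m fvec f u1)).
  by rewrite /u2 !mulmxDr -!scalemxAr mulmxDr -!scalemxAr !mulmxA hsg.
rewrite id3 -hE13u2.
apply: (@vnorm_conv R n.+1 _ _ (37/64) rho r0'); first by lra.
  rewrite scalemxAr -mulmxDr.
  apply: (le_trans (hE _ _ _)); first by lra.
  apply: hF => //; lra.
rewrite scalemxAr -mulmxDr.
apply: (le_trans (hE _ _ _)); first by lra.
apply: hF => //; lra.
Qed.
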